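(* Let $n\ge4$, $\mathfrak g=\mathfrak{so}(2n+1,\mathbb C)$, and let $\mathfrak q=\mathfrak l\oplus\mathfrak n$ be the maximal parabolic subalgebra of type $B_n(n-1)$ (determined by $\alpha_{n-1}$). Let $V(\mu+\epsilon_{n\gamma})=\mathfrak l_{n\gamma}\otimes\mathfrak z(\mathfrak n)$. Then the $\mathfrak l$-intertwining operator $\tilde\tau_2|_{V(\mu+\epsilon_{n\gamma})^*}:V(\mu+\epsilon_{n\gamma})^*\to\mathcal P^2(\mathfrak g(1))$ is not identically zero.
   Context: Type $B_n$: $\mathfrak g=\mathfrak{so}(2n+1,\mathbb C)$ with Cartan $\mathfrak h$, roots $\pm\varepsilon_j\pm\varepsilon_k$ ($j<k$) and $\pm\varepsilon_j$, simple roots $\alpha_j=\varepsilon_j-\varepsilon_{j+1}$ ($j<n$), $\alpha_n=\varepsilon_n$, Killing form $\kappa$, root vectors $X_\alpha$. $\mathfrak q=\mathfrak l\oplus\mathfrak n$ is the standard maximal parabolic subalgebra determined by $\alpha_{n-1}$: $\mathfrak l$ is $\mathfrak h$ plus root spaces of roots in the span of $\Pi\setminus\{\alpha_{n-1}\}$. Grading by the $\alpha_{n-1}$-coefficient: $\mathfrak g=\bigoplus_{j=-2}^2\mathfrak g(j)$, $\mathfrak l=\mathfrak g(0)$, $\Delta(\mathfrak g(1))=\{\varepsilon_j\pm\varepsilon_n,\ \varepsilon_j : 1\le j\le n-1\}$, $\mathfrak z(\mathfrak n)=\mathfrak g(2)$ with roots $\varepsilon_j+\varepsilon_k$ ($1\le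 j<k\le n-1$), $\bar{\mathfrak n}=\mathfrak g(-1)\oplus\mathfrak g(-2)$, $\mathfrak z(\bar{\mathfrak n})=\mathfrak g(-2)$. The highest weight of $\mathfrak g(1)$ is $\mu=\varepsilon_1+\varepsilon_n$. $\mathfrak l_{n\gamma}=\mathrm{span}\{X_{\varepsilon_n},[X_{\varepsilon_n},X_{-\varepsilon_n}],X_{-\varepsilon_n}\}\cong\mathfrak{sl}(2,\mathbb C)$ is the simple ideal of $[\mathfrak l,\mathfrak l]$ corresponding to $\alpha_n$; $\mathfrak l_{n\gamma}\otimes\mathfrak z(\mathfrak n)$ is an irreducible $\mathfrak l$-module, denoted $V(\mu+\epsilon_{n\gamma})$, of highest weight $\varepsilon_1+\varepsilon_2+\varepsilon_n$. $\omega=\sum_{\gamma\in\Delta(\mathfrak z(\mathfrak n))}X^*_\gamma\otimes X_\gamma$ where $X^*_\gamma\in\mathfrak g_{-\gamma}$, $\kappa(X^*_\gamma,X_{\gamma'})=\delta_{\gamma\gamma'}$; $\tau_2:\mathfrak g(1)\to\mathfrak l\otimes\mathfrak z(\mathfrak n)$, $\tau_2(X)=\tfrac12(\mathrm{ad}(X)^2\otimes\mathrm{Id})\omega$. For an irreducible constituent $W$ of $\mathfrak l\otimes\mathfrak z(\mathfrak n)$ its dual $W^*$ is realized in $\mathfrak l\otimes\mathfrak z(\bar{\mathfrak n})$ via $(A\otimes B)(C\otimes D)=\kappa(A,C)\kappa(B,D)$, and $\tilde\tau_2|_{W^*}:W^*\to\mathcal P^2(\mathfrak g(1))$ (quadratic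 polynomials on $\mathfrak g(1)$) is $\tilde\tau_2(Y^* )(X)=Y^*(\tau_2(X))$. *)

(* Defs.v *)
(* matrix model of so(2n+1, C), C := R[i] for R : realType. *)
From mathcomp Require Import all_boot all_order all_algebra complex.
From mathcomp Require Import reals.
Set Implicit Arguments. Unset Strict Implicit. Unset Printing Implicit Defensive.
Import Order.TTheory GRing.Theory Num.Theory.
Local Open Scope ring_scope.

Section SoModel.
Variables (K : fieldType) (n : nat).

(* Basis of C^(2n+1): index i < n  <-> e_{i+1};  n <= i < 2n <-> e_{-(i-n+1)};
   i = 2n <-> e_0.  Symmetric form: (e_i, e_{-i}) = 1, (e_0, e_0) = 1. *)
Definition Jform : 'M[K]_(n.*2.+1) :=
  \matrix_(i < n.*2.+1, j < n.*2.+1)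
    ((((i < n)%N && (nat_of_ord j == (nat_of_ord i + n)%N))
     || ((j < n)%N && (nat_of_ord i == (nat_of_ord j + n)%N))
     || ((i == n.*2 :> nat) && (j == n.*2 :> nat)))%:R).

Definition gso : {vspace 'M[K]_(n.*2.+1)} :=
  lker (linfun (fun X : 'M[K]_(n.*2.+1) => X^T *m Jform + Jform *m X)).

Definition lie (X Y : 'M[K]_(n.*2.+1)) : 'M[K]_(n.*2.+1) := X *m Y - Y *m X.

Definition kappa (X Y : 'M[K]_(n.*2.+1)) : K :=
  \sum_(i < \dim gso)
     coord (vbasis gso) i (lie X (lie Y (tnth (vbasis gso) i))).

Definition cartan (H : 'M[K]_(n.*2.+1)) : Prop := H \in gso /\ is_diag_mx H.

(* A weight lambda = sum_i lambda_i eps_{i+1} evaluated on H \in h *)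
Definition weval (lam : 'I_n -> K) (H : 'M[K]_(n.*2.+1)) : K :=
  \sum_(i < n) lam i * H (inord i) (inord i).

(* eps_{j+1} (0-indexed j) *)
Definition eps (j : nat) : 'I_n -> K := fun i => (i == j :> nat)%:R.
Definition wadd (a b : 'I_n -> K) : 'I_n -> K := fun i => a i + b i.
Definition wopp (a : 'I_n -> K) : 'I_n -> K := fun i => - a i.

Definition rootsp (lam : 'I_n -> K) (X : 'M[K]_(n.*2.+1)) : Prop :=
  X \in gso /\ forall H, cartan H -> lie H X = weval lam H *: X.

(* Grading element H0 in h: alpha_j(H0) = delta_{j,n-1}, i.e.
   H0 = diag(1,..,1,0,-1,..,-1,0,0), so that g(j) = { X in g | [H0,X] = j X }
   is the span of root spaces whose alpha_{n-1}-coefficient is j (plus h if j=0). *)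
Definition H0 : 'M[K]_(n.*2.+1) :=
  \matrix_(i < n.*2.+1, j < n.*2.+1) (if i == j then
                    (if (i < n.-1)%N then 1
                     else if ((n <= i) && (i < n + n.-1))%N then -1 else 0)
                  else 0).

Definition grade (j : int) (X : 'M[K]_(n.*2.+1)) : Prop :=
  X \in gso /\ lie H0 X = j%:~R *: X.

Definition lngamma (Xe Xme A : 'M[K]_(n.*2.+1)) : Prop :=
  exists a b c : K, A = a *: Xe + b *: lie Xe Xme + c *: Xme.

(* Tensors in g (x) g are represented as formal finite sums of pure tensors;
   the pairing (A (x) B)(C (x) D) = kappa(A,C) kappa(B,D), extended bilinearly. *)
Definition tpair (s t : seq ('M[K]_(n.*2.+1) * 'M[K]_(n.*2.+1))) : K :=
  \sum_(p <- s) \sum_(q <- t) kappa p.1 q.1 * kappa p.2 q.2.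

(* Delta(z(n)) = { eps_{j+1} + eps_{k+1} : j < k < n-1 } (0-indexed).
   omega = sum_gamma X*_gamma (x) X_gamma;
   tau_2(X) = 1/2 (ad(X)^2 (x) Id) omega. *)
Definition tau2 (Xg Xs : nat -> nat -> 'M[K]_(n.*2.+1)) (X : 'M[K]_(n.*2.+1))
  : seq ('M[K]_(n.*2.+1) * 'M[K]_(n.*2.+1)) :=
  [seq (2%:R^-1 *: lie X (lie X (Xs jk.1 jk.2)), Xg jk.1 jk.2)
  | jk <- [seq jk <- [seq (j, k) | j <- iota 0 n, k <- iota 0 n]
                | (jk.1 < jk.2 < n.-1)%N]].

Definition tau2t (Xg Xs : nat -> nat -> 'M[K]_(n.*2.+1))
  (Ystar : seq ('M[K]_(n.*2.+1) * 'M[K]_(n.*2.+1))) (X : 'M[K]_(n.*2.+1)) : K :=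
  tpair Ystar (tau2 Xg Xs X).

End SoModel.

(* Main.v *)
From HB Require Import structures.
Require Import Defs.
From mathcomp Require Import all_boot all_order all_algebra complex.
From mathcomp Require Import reals zify.
Set Implicit Arguments. Unset Strict Implicit. Unset Printing Implicit Defensive.
Import Order.TTheory GRing.Theory Num.Theory.
Local Open Scope ring_scope.

Section Gen.
Variables (K : fieldType) (n : nat).
Local Notation N := n.*2.+1.
Local Notation M := 'M[K]_N.
Local Notation J := (Jform K n).

Definition gsof (X : M) : M := X^T *m J + J *m X.
Fact gsof_lin : linear gsof.
Proof.
move=> a u v; rewrite /gsof linearD linearZ /= mulmxDl mulmxDr -!scalemxAl -!scalemxAr.
by rewrite scalerDr addrACA.
Qed.
HB.instance Definition _ := GRing.isLinear.Build K M M *:%R gsof gsof_lin.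

Lemma gsoP X : (X \in gso K n) = (X^T *m J + J *m X == 0).
Proof. by rewrite memv_ker -[linfun _]/(linfun gsof) lfunE. Qed.

Definition sig (i : 'I_N) : 'I_N :=
  inord (if (i < n)%N then (i + n)%N else if (i < n.*2)%N then (i - n)%N else n.*2).

Lemma sig_val (i : 'I_N) : nat_of_ord (sig i) =
  (if (i < n)%N then (i + n)%N else if (i < n.*2)%N then (i - n)%N else n.*2).
Proof.
rewrite inordK //; have := ltn_ord i; case: ifP => h1; [lia|]; case: ifP => h2; lia.
Qed.

Lemma sigK : involutive sig.
Proof.
move=> i; apply: val_inj => /=; rewrite !sig_val.
have := ltn_ord i; case: (ltnP i n) => h1 h; [|case: (ltnP i n.*2) => h2];
 rewrite ?sig_val; repeat (case: ifP => ?); lia.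
Qed.

Lemma J_E a b : J a b = (b == sig a)%:R.
Proof.
rewrite mxE; congr (_%:R); rewrite -(inj_eq val_inj) /= sig_val.
have := ltn_ord a; have := ltn_ord b.
case: ifP => h1; [|case: ifP => h2]; move=> hb ha; lia.
Qed.

Lemma mulJ (A : M) a b : (J *m A) a b = A (sig a) b.
Proof.
rewrite mxE (bigD1 (sig a)) //= J_E eqxx mul1r big1 ?addr0 // => k /negbTE hk.
by rewrite J_E hk mul0r.
Qed.

Lemma mulmxJ (A : M) a b : (A *m J) a b = A a (sig b).
Proof.
rewrite mxE (bigD1 (sig b)) //= J_E sigK eqxx mulr1 big1 ?addr0 // => k hk.
rewrite J_E; case: eqP => [e|]; last by rewrite mulr0.
by move: hk; rewrite e sigK eqxx.
Qed.

Lemma gso_entry X a b : X \in gso K n -> X (sig b) a + X (sig a) b = 0.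
Proof.
rewrite gsoP => /eqP /matrixP /(_ a b).
by rewrite [X in X = _ -> _]mxE mulmxJ mulJ [X^T _ _]mxE [X in _ = X -> _]mxE.
Qed.

Lemma gso_rel X : X \in gso K n -> X^T *m J = - (J *m X).
Proof. by rewrite gsoP => /eqP /(canRL (addrK _)); rewrite sub0r. Qed.

Lemma lie_gso X Y : X \in gso K n -> Y \in gso K n -> lie X Y \in gso K n.
Proof.
move=> hX hY; rewrite gsoP /lie linearB /= !trmx_mul.
have eX := gso_rel hX; have eY := gso_rel hY.
rewrite mulmxBl mulmxBr -!mulmxA eX eY !mulmxN !mulmxA eX eY !mulNmx !opprK -!mulmxA.
by rewrite addrC subrKA subrr.
Qed.

Local Notation U := (gso K n).
Local Notation B := (vbasis U).

Definition ad (A : M) := fun X : M => lie A X.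
Fact ad_lin A : linear (ad A).
Proof.
move=> a u v; rewrite /ad /lie mulmxDr mulmxDl -scalemxAr -scalemxAl.
by rewrite opprD addrACA scalerBr.
Qed.
HB.instance Definition _ A := GRing.isLinear.Build K M M *:%R (ad A) (ad_lin A).

Definition tr (f : M -> M) := \sum_(i < \dim U) coord B i (f (tnth B i)).

Lemma B_mem i : tnth B i \in U.
Proof. by apply: vbasis_mem; rewrite mem_tnth. Qed.

Lemma tr_comm (f g : {linear M -> M}) :
  (forall u, u \in U -> f u \in U) -> (forall u, u \in U -> g u \in U) ->
  tr (f \o g) = tr (g \o f).
Proof.
move=> fU gU.
have ex (h k : {linear M -> M}) : (forall u, u \in U -> k u \in U) -> forall i,
  coord B i (h (k (tnth B i))) =
  \sum_(j < \dim U) coord B j (k (tnth B i)) * coord B i (h (tnth B j)).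
  move=> kU i; rewrite {1}(coord_vbasis (kU _ (B_mem i))) !linear_sum /=.
  by apply: eq_bigr => j _; rewrite !linearZ /= !(tnth_nth 0).
rewrite /tr; under eq_bigr do rewrite /= ex //.
under [RHS]eq_bigr do rewrite /= ex //.
rewrite exchange_big /=; apply: eq_bigr => i _; apply: eq_bigr => j _.
by rewrite mulrC.
Qed.

Lemma zmodid (V : zmodType) (a b c d e f : V) :
  a - b - (c - d) = a - e - (f - d) - (b - f - (e - c)).
Proof.
rewrite !opprB !addrA.
rewrite (addrAC _ (- c) f) (addrAC _ e f) subrK (addrAC _ d e) subrK.
by rewrite (addrAC a (- b) d) (addrAC _ (- b) (- c)).
Qed.

Lemma lieJ (A X Z : M) : lie (lie A X) Z = lie A (lie X Z) - lie X (lie A Z).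
Proof. by rewrite /lie !mulmxBl !mulmxBr !mulmxA; apply: zmodid. Qed.

Lemma kappaE (X Y : M) : kappa X Y = tr (ad X \o ad Y).
Proof. by []. Qed.

Lemma trB (f g : M -> M) : tr (fun b => f b - g b) = tr f - tr g.
Proof. by rewrite /tr -sumrB; apply: eq_bigr => i _; rewrite linearB. Qed.

Lemma adU A u : A \in U -> u \in U -> ad A u \in U.
Proof. exact: lie_gso. Qed.

Lemma kappa_sym A C : A \in U -> C \in U -> kappa A C = kappa C A.
Proof. by move=> hA hC; rewrite !kappaE tr_comm // => u; apply: adU. Qed.

Lemma lieBr (A u v : M) : lie A (u - v) = lie A u - lie A v.
Proof. exact: (linearB (ad A)). Qed.

Lemma kappa_inv A X C : A \in U -> X \in U -> C \in U ->
  kappa (lie A X) C = kappa A (lie X C).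
Proof.
move=> hA hX hC; rewrite /kappa.
under eq_bigr do rewrite lieJ.
under [RHS]eq_bigr do rewrite lieJ lieBr.
have e1 := trB (ad A \o (ad X \o ad C)) (ad X \o (ad A \o ad C)).
have e2 := trB (ad A \o (ad X \o ad C)) (ad A \o (ad C \o ad X)).
rewrite /tr /ad /= in e1 e2. rewrite /ad e1 e2; congr (_ - _).
have := @tr_comm (ad X) (ad A \o ad C); rewrite /tr /= => ->; first by [].
- by move=> u; apply: adU.
- by move=> u hu; apply: adU => //; apply: adU.
Qed.

Lemma kappaZl a (A C : M) : kappa (a *: A) C = a * kappa A C.
Proof.
rewrite /kappa mulr_sumr; apply: eq_bigr => i _.
by rewrite -[lie (a *: A) _]/(ad (a *: A) _) /ad /lie -scalemxAl -scalemxAr -scalerBr linearZ.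
Qed.

Lemma lieZl a (C b : M) : lie (a *: C) b = a *: lie C b.
Proof. by rewrite /lie -scalemxAl -scalemxAr -scalerBr. Qed.

Lemma lieZr a (A w : M) : lie A (a *: w) = a *: lie A w.
Proof. by rewrite /lie -scalemxAl -scalemxAr -scalerBr. Qed.

Lemma kappaZr a (A C : M) : kappa A (a *: C) = a * kappa A C.
Proof.
rewrite /kappa mulr_sumr; apply: eq_bigr => i _.
by rewrite lieZl lieZr linearZ.
Qed.

Lemma kappa0r (A : M) : kappa A 0 = 0.
Proof. by rewrite -(scale0r 0) kappaZr mul0r. Qed.

Lemma diag_gso (d : 'rV[K]_N) : (forall k, d 0 (sig k) = - d 0 k) -> diag_mx d \in U.
Proof.
move=> hd; rewrite gsoP tr_diag_mx; apply/eqP/matrixP => a b.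
have JE := J_E a b; rewrite mxE in JE.
rewrite mul_diag_mx mul_mx_diag !mxE JE.
case: eqP => [->|_]; last by rewrite !mulr0 mul0r addr0.
by rewrite hd mulr1 mul1r subrr.
Qed.

Lemma lie_diag (d : 'rV[K]_N) (Y : M) a b :
  (lie (diag_mx d) Y) a b = (d 0 a - d 0 b) * Y a b.
Proof. by rewrite /lie mul_diag_mx mul_mx_diag !mxE mulrBl [Y a b * _]mulrC. Qed.

Definition cf (k i : nat) : int := (k == i)%N%:Z - (k == (i + n)%N)%N%:Z.

Definition Di (i : nat) : M := diag_mx (\row_k (cf k i)%:~R).

Lemma cf_sig (k : 'I_N) i : (i < n)%N -> cf (sig k) i = - cf k i.
Proof.
move=> hi; rewrite /cf sig_val; have := ltn_ord k.
case: ifP => h1; [|case: ifP => h2]; move=> hk; lia.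
Qed.

Lemma cartan_Di i : (i < n)%N -> cartan (Di i).
Proof.
move=> hi; split; last exact: diag_mx_is_diag.
by apply: diag_gso => k; rewrite !mxE cf_sig // mulrNz.
Qed.

Lemma weval_Di (lam : 'I_n -> K) (i : 'I_n) : weval lam (Di i) = lam i.
Proof.
rewrite /weval (bigD1 i) //= big1 ?addr0.
  rewrite /Di !mxE eqxx mulr1n /cf inordK; last by have := ltn_ord i; lia.
  by rewrite eqxx (_ : ((i : nat) == (i + n)%N) = false) ?subr0 ?mulr1 //; have := ltn_ord i; lia.
move=> k hk; rewrite /Di !mxE eqxx mulr1n /cf inordK; last by have := ltn_ord k; lia.
have -> : (k == i :> nat) = false by apply/negbTE.
by rewrite (_ : ((k : nat) == (i + n)%N) = false) ?subr0 ?mulr0 //; have := ltn_ord k; lia.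
Qed.

Lemma root_entry (lam : 'I_n -> K) (Y : M) a b : rootsp lam Y -> Y a b != 0 ->
  forall i : 'I_n, (cf a i)%:~R - (cf b i)%:~R = lam i.
Proof.
move=> [hY hl] hab i; have := hl _ (cartan_Di (ltn_ord i)).
move=> /matrixP /(_ a b); rewrite lie_diag weval_Di [RHS]mxE !mxE.
by move/(mulIf hab).
Qed.

Lemma cf_lt k i : (k < n)%N -> cf k i = (k == i)%N%:Z.
Proof. by rewrite /cf => h; rewrite (_ : (k == i + n)%N = false) ?subr0 //; lia. Qed.
Lemma cf_mid k i : (i < n)%N -> (n <= k)%N -> cf k i = - (k - n == i)%N%:Z.
Proof. rewrite /cf => h1 h2.
 rewrite (_ : (k == i)%N = false); last by lia.
 rewrite (_ : (k == i + n)%N = (k - n == i)%N); last by lia.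
 by rewrite sub0r.
Qed.
Lemma cf_top i : (i < n)%N -> cf n.*2 i = 0.
Proof.
rewrite /cf => h1; rewrite (_ : (n.*2 == i)%N = false); last by lia.
by rewrite (_ : (n.*2 == i + n)%N = false) //; lia.
Qed.

Lemma comb_e (a b : nat) : (2 <= n)%N -> (a <= n.*2)%N -> (b <= n.*2)%N ->
  (forall i, (i < n)%N -> cf a i - cf b i = (i == n.-1)%N%:Z) ->
  (a == n.-1) && (b == n.*2) || (a == n.*2) && (b == n.*2 - 1)%N.
Proof.
move=> hn ha hb H.
have hn1 : (n.-1 < n)%N by lia.
have h1 := H n.-1 hn1.
have [ha1|ha1] := ltnP a n; [|have [ha2|ha2] := ltnP a n.*2];
 (have [hb1|hb1] := ltnP b n; [|have [hb2|hb2] := ltnP b n.*2]).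
- have := H b hb1; move: h1; rewrite !(@cf_lt _ _ ha1) !(@cf_lt _ _ hb1); lia.
- have hbn : (b - n < n)%N by lia.
  have := H a ha1; have := H _ hbn; move: h1.
  rewrite !(@cf_lt _ _ ha1) (@cf_mid _ _ hn1 hb1) (@cf_mid _ _ ha1 hb1) (@cf_mid _ _ hbn hb1); lia.
- have eb : b = n.*2 by lia.
  have := H a ha1; move: h1; rewrite eb !(@cf_lt _ _ ha1) !cf_top //; lia.
- move: h1; rewrite (@cf_lt _ _ hb1) (@cf_mid _ _ hn1 ha1); lia.
- have han : (a - n < n)%N by lia.
  have := H _ han; move: h1; rewrite (@cf_mid _ _ hn1 ha1) (@cf_mid _ _ hn1 hb1) (@cf_mid _ _ han ha1) (@cf_mid _ _ han hb1); lia.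
- have eb : b = n.*2 by lia.
  move: h1; rewrite eb (@cf_mid _ _ hn1 ha1) !cf_top //; lia.
- have ea : a = n.*2 by lia.
  move: h1; rewrite ea (@cf_lt _ _ hb1) !cf_top //; lia.
- have ea : a = n.*2 by lia.
  have hbn : (b - n < n)%N by lia.
  have := H _ hbn; move: h1; rewrite ea (@cf_mid _ _ hn1 hb1) (@cf_mid _ _ hbn hb1) !cf_top //; lia.
- have ea : a = n.*2 by lia. have eb : b = n.*2 by lia.
  move: h1; rewrite ea eb !cf_top //; lia.
Qed.

Lemma comb_g (a b : nat) : (2 <= n)%N -> 
  (cf a 0 - cf b 0 = 1) -> (cf a 1 - cf b 1 = 1) ->
  (a == 0) && (b == n.+1) || (a == 1) && (b == n)%N.
Proof. rewrite /cf => hn; lia. Qed.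

End Gen.

Lemma shape2 (K : fieldType) m (Y : 'M[K]_m) (p1 q1 p2 q2 : 'I_m) :
  (forall a b, Y a b != 0 -> (a == p1) && (b == q1) || (a == p2) && (b == q2)) ->
  p1 != p2 -> Y p2 q2 = - Y p1 q1 ->
  Y = Y p1 q1 *: (delta_mx p1 q1 - delta_mx p2 q2).
Proof.
move=> H hp hrel; apply/matrixP => a b; rewrite !mxE.
have [z|nz] := eqVneq (Y a b) 0.
  rewrite z; case e1: ((a == p1) && (b == q1)).
    by move/andP: e1 => [/eqP ea /eqP eb]; rewrite -ea -eb z mul0r.
  case e2: ((a == p2) && (b == q2)); last by rewrite subrr mulr0.
  move/andP: e2 => [/eqP ea /eqP eb].
  have -> : Y p1 q1 = 0 by rewrite -[Y p1 q1]opprK -hrel -ea -eb z oppr0.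
  by rewrite mul0r.
case/orP: (H a b nz) => /andP [/eqP -> /eqP ->].
  by rewrite !eqxx (negbTE hp) subr0 mulr1.
by rewrite !eqxx eq_sym (negbTE hp) /= sub0r mulrN1 hrel.
Qed.

Section Spec.
Variables (K : numFieldType) (n : nat).
Hypothesis hn : (4 <= n)%N.
Local Notation N := n.*2.+1.
Local Notation M := 'M[K]_N.

Definition o (k : nat) : 'I_N := inord k.
Lemma o_val k : (k < N)%N -> nat_of_ord (o k) = k.
Proof. exact: inordK. Qed.
Lemma eq_o (a : 'I_N) k : (k < N)%N -> (a == o k) = (nat_of_ord a == k).
Proof. by move=> hk; rewrite -(inj_eq val_inj) /= o_val. Qed.

Lemma root_int (lam : 'I_n -> K) (Y : M) a b (i : 'I_n) (z : int) :
  rootsp lam Y -> Y a b != 0 -> lam i = z%:~R -> cf n a i - cf n b i = z.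
Proof.
move=> hY nz hz; apply: (@intr_inj K); rewrite intrB -hz.
exact: root_entry hY nz i.
Qed.

Lemma sig_o k l : (k < N)%N -> (l < N)%N ->
  l = (if (k < n)%N then (k + n)%N else if (k < n.*2)%N then (k - n)%N else n.*2) ->
  sig (o k) = o l.
Proof. by move=> hk hl e; apply: val_inj => /=; rewrite sig_val !o_val. Qed.

Lemma shape_e (Y : M) : rootsp (eps K n.-1) Y ->
  Y = Y (o n.-1) (o n.*2) *: (delta_mx (o n.-1) (o n.*2) - delta_mx (o n.*2) (o (n.*2 - 1))).
Proof.
move=> hY; apply: shape2.
- move=> a b nz; rewrite !eq_o; try lia.
  apply: comb_e; try lia.
  + by have := ltn_ord a; lia.
  + by have := ltn_ord b; lia.
  move=> i hi; apply: (root_int (i := Ordinal hi) hY nz).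
  by rewrite /eps /=.
- by rewrite eq_o ?o_val; lia.
- have := @gso_entry K n Y (o (n.*2 - 1)) (o n.*2) hY.1.
  rewrite (@sig_o n.*2 n.*2); try lia; last by rewrite ifF ?ifF; lia.
  rewrite (@sig_o (n.*2 - 1) n.-1); try lia; last by rewrite ifF ?ifT; lia.
  by move/eqP; rewrite addr_eq0 => /eqP.
Qed.

Lemma shape_g (Y : M) : rootsp (wadd (eps K 0) (eps K 1)) Y ->
  Y = Y (o 0) (o n.+1) *: (delta_mx (o 0) (o n.+1) - delta_mx (o 1) (o n)).
Proof.
move=> hY; apply: shape2.
- move=> a b nz; rewrite !eq_o; try lia.
  have i0 : (0 < n)%N by lia.
  have i1 : (1 < n)%N by lia.
  apply: comb_g; first lia.
  + have := root_int (i := Ordinal i0) (z := 1) hY nz; apply.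
    by rewrite /wadd /eps /= addr0.
  + have := root_int (i := Ordinal i1) (z := 1) hY nz; apply.
    by rewrite /wadd /eps /= add0r.
- by rewrite eq_o ?o_val; lia.
- have := @gso_entry K n Y (o n.+1) (o n) hY.1.
  rewrite (@sig_o n 0); try lia; last by rewrite ifF ?ifT; lia.
  rewrite (@sig_o n.+1 1); try lia; last by rewrite ifF ?ifT; lia.
  by move/eqP; rewrite addrC addr_eq0 => /eqP.
Qed.

Lemma ne_0_1 : (o 0 == o 1) = false.
Proof. by rewrite eq_o ?o_val; lia. Qed.
Lemma ne_0_A : (o 0 == o n.-1) = false.
Proof. by rewrite eq_o ?o_val; lia. Qed.
Lemma ne_0_B : (o 0 == o n) = false.
Proof. by rewrite eq_o ?o_val; lia. Qed.
Lemma ne_0_C : (o 0 == o n.+1) = false.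
Proof. by rewrite eq_o ?o_val; lia. Qed.
Lemma ne_0_D : (o 0 == o (n.*2 - 1)) = false.
Proof. by rewrite eq_o ?o_val; lia. Qed.
Lemma ne_0_E : (o 0 == o n.*2) = false.
Proof. by rewrite eq_o ?o_val; lia. Qed.
Lemma ne_1_0 : (o 1 == o 0) = false.
Proof. by rewrite eq_o ?o_val; lia. Qed.
Lemma ne_1_A : (o 1 == o n.-1) = false.
Proof. by rewrite eq_o ?o_val; lia. Qed.
Lemma ne_1_B : (o 1 == o n) = false.
Proof. by rewrite eq_o ?o_val; lia. Qed.
Lemma ne_1_C : (o 1 == o n.+1) = false.
Proof. by rewrite eq_o ?o_val; lia. Qed.
Lemma ne_1_D : (o 1 == o (n.*2 - 1)) = false.
Proof. by rewrite eq_o ?o_val; lia. Qed.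
Lemma ne_1_E : (o 1 == o n.*2) = false.
Proof. by rewrite eq_o ?o_val; lia. Qed.
Lemma ne_A_0 : (o n.-1 == o 0) = false.
Proof. by rewrite eq_o ?o_val; lia. Qed.
Lemma ne_A_1 : (o n.-1 == o 1) = false.
Proof. by rewrite eq_o ?o_val; lia. Qed.
Lemma ne_A_B : (o n.-1 == o n) = false.
Proof. by rewrite eq_o ?o_val; lia. Qed.
Lemma ne_A_C : (o n.-1 == o n.+1) = false.
Proof. by rewrite eq_o ?o_val; lia. Qed.
Lemma ne_A_D : (o n.-1 == o (n.*2 - 1)) = false.
Proof. by rewrite eq_o ?o_val; lia. Qed.
Lemma ne_A_E : (o n.-1 == o n.*2) = false.
Proof. by rewrite eq_o ?o_val; lia. Qed.
Lemma ne_B_0 : (o n == o 0) = false.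
Proof. by rewrite eq_o ?o_val; lia. Qed.
Lemma ne_B_1 : (o n == o 1) = false.
Proof. by rewrite eq_o ?o_val; lia. Qed.
Lemma ne_B_A : (o n == o n.-1) = false.
Proof. by rewrite eq_o ?o_val; lia. Qed.
Lemma ne_B_C : (o n == o n.+1) = false.
Proof. by rewrite eq_o ?o_val; lia. Qed.
Lemma ne_B_D : (o n == o (n.*2 - 1)) = false.
Proof. by rewrite eq_o ?o_val; lia. Qed.
Lemma ne_B_E : (o n == o n.*2) = false.
Proof. by rewrite eq_o ?o_val; lia. Qed.
Lemma ne_C_0 : (o n.+1 == o 0) = false.
Proof. by rewrite eq_o ?o_val; lia. Qed.
Lemma ne_C_1 : (o n.+1 == o 1) = false.
Proof. by rewrite eq_o ?o_val; lia. Qed.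
Lemma ne_C_A : (o n.+1 == o n.-1) = false.
Proof. by rewrite eq_o ?o_val; lia. Qed.
Lemma ne_C_B : (o n.+1 == o n) = false.
Proof. by rewrite eq_o ?o_val; lia. Qed.
Lemma ne_C_D : (o n.+1 == o (n.*2 - 1)) = false.
Proof. by rewrite eq_o ?o_val; lia. Qed.
Lemma ne_C_E : (o n.+1 == o n.*2) = false.
Proof. by rewrite eq_o ?o_val; lia. Qed.
Lemma ne_D_0 : (o (n.*2 - 1) == o 0) = false.
Proof. by rewrite eq_o ?o_val; lia. Qed.
Lemma ne_D_1 : (o (n.*2 - 1) == o 1) = false.
Proof. by rewrite eq_o ?o_val; lia. Qed.
Lemma ne_D_A : (o (n.*2 - 1) == o n.-1) = false.
Proof. by rewrite eq_o ?o_val; lia. Qed.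
Lemma ne_D_B : (o (n.*2 - 1) == o n) = false.
Proof. by rewrite eq_o ?o_val; lia. Qed.
Lemma ne_D_C : (o (n.*2 - 1) == o n.+1) = false.
Proof. by rewrite eq_o ?o_val; lia. Qed.
Lemma ne_D_E : (o (n.*2 - 1) == o n.*2) = false.
Proof. by rewrite eq_o ?o_val; lia. Qed.
Lemma ne_E_0 : (o n.*2 == o 0) = false.
Proof. by rewrite eq_o ?o_val; lia. Qed.
Lemma ne_E_1 : (o n.*2 == o 1) = false.
Proof. by rewrite eq_o ?o_val; lia. Qed.
Lemma ne_E_A : (o n.*2 == o n.-1) = false.
Proof. by rewrite eq_o ?o_val; lia. Qed.
Lemma ne_E_B : (o n.*2 == o n) = false.
Proof. by rewrite eq_o ?o_val; lia. Qed.
Lemma ne_E_C : (o n.*2 == o n.+1) = false.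
Proof. by rewrite eq_o ?o_val; lia. Qed.
Lemma ne_E_D : (o n.*2 == o (n.*2 - 1)) = false.
Proof. by rewrite eq_o ?o_val; lia. Qed.
Definition neqs := (ne_0_1, ne_0_A, ne_0_B, ne_0_C, ne_0_D, ne_0_E, ne_1_0, ne_1_A, ne_1_B, ne_1_C, ne_1_D, ne_1_E, ne_A_0, ne_A_1, ne_A_B, ne_A_C, ne_A_D, ne_A_E, ne_B_0, ne_B_1, ne_B_A, ne_B_C, ne_B_D, ne_B_E, ne_C_0, ne_C_1, ne_C_A, ne_C_B, ne_C_D, ne_C_E, ne_D_0, ne_D_1, ne_D_A, ne_D_B, ne_D_C, ne_D_E, ne_E_0, ne_E_1, ne_E_A, ne_E_B, ne_E_C, ne_E_D).

Definition Xe0 : M := delta_mx (o n.-1) (o n.*2) - delta_mx (o n.*2) (o (n.*2 - 1)).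
Definition X1 : M := delta_mx (o 0) (o n.-1) - delta_mx (o (n.*2 - 1)) (o n)
   + (delta_mx (o 1) (o n.*2) - delta_mx (o n.*2) (o n.+1)).
Definition Eg : M := delta_mx (o 0) (o n.+1) - delta_mx (o 1) (o n).

Definition Y1 : M := - delta_mx (o n.-1) (o n.+1) + delta_mx (o n.*2) (o n) -
  (delta_mx (o 0) (o n.*2) - delta_mx (o 1) (o (n.*2 - 1))).

Ltac dsimp := rewrite ?(mulmxDl, mulmxDr, mulNmx, mulmxN) !mul_delta_mx_cond !neqs !eqxx
   !mulr0n !mulr1n ?(oppr0, addr0, add0r, opprK, subr0, sub0r).

Lemma step1 : lie Xe0 X1 = Y1.
Proof. by rewrite /lie /Xe0 /X1; dsimp. Qed.

Lemma step2 : lie Y1 X1 = 2%:R *: Eg.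
Proof.
rewrite /lie /Y1 /X1; dsimp.
by rewrite /Eg scaler_nat mulr2n opprD opprK [- _ + _]addrC.
Qed.

Lemma Jdelta (a b : 'I_N) : Jform K n *m delta_mx a b = delta_mx (sig a) b :> M.
Proof.
apply/matrixP => i j; rewrite mulJ !mxE.
by rewrite -[a in sig i == a]sigK (inj_eq (inv_inj (@sigK n))).
Qed.

Lemma deltaJ (a b : 'I_N) : delta_mx a b *m Jform K n = delta_mx a (sig b) :> M.
Proof.
apply/matrixP => i j; rewrite mulmxJ !mxE.
by rewrite -[b in sig j == b]sigK (inj_eq (inv_inj (@sigK n))).
Qed.

Lemma sig0 : sig (o 0) = o n. Proof. by apply: sig_o; try lia; rewrite ifT; lia. Qed.
Lemma sig1 : sig (o 1) = o n.+1. Proof. by apply: sig_o; try lia; rewrite ifT; lia. Qed.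
Lemma sigA : sig (o n.-1) = o (n.*2 - 1). Proof. by apply: sig_o; try lia; rewrite ifT; lia. Qed.
Lemma sigB : sig (o n) = o 0. Proof. by apply: sig_o; try lia; rewrite ifF ?ifT; lia. Qed.
Lemma sigC : sig (o n.+1) = o 1. Proof. by apply: sig_o; try lia; rewrite ifF ?ifT; lia. Qed.
Lemma sigD : sig (o (n.*2 - 1)) = o n.-1. Proof. by apply: sig_o; try lia; rewrite ifF ?ifT; lia. Qed.
Lemma sigE : sig (o n.*2) = o n.*2. Proof. by apply: sig_o; try lia; rewrite ifF ?ifF; lia. Qed.
Definition sigs := (sig0, sig1, sigA, sigB, sigC, sigD, sigE).

Lemma X1_gso : X1 \in gso K n.
Proof.
rewrite gsoP /X1 ?(linearD, linearB, linearN) /= !trmx_delta.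
rewrite ?(mulmxDl, mulmxDr, mulNmx, mulmxN) !Jdelta !deltaJ !sigs.
by rewrite addr_eq0 opprD !opprB.
Qed.

Lemma diag_delta (d : 'rV[K]_N) (a b : 'I_N) :
  lie (diag_mx d) (delta_mx a b) = (d 0 a - d 0 b) *: delta_mx a b.
Proof.
apply/matrixP => i j; rewrite lie_diag [RHS]mxE [delta_mx a b i j]mxE.
case: (eqVneq i a) => [->|]; case: (eqVneq j b) => [->|] //= *; by rewrite ?mulr0.
Qed.

Lemma H0_delta (a b : 'I_N) : lie (H0 K n) (delta_mx a b) = (H0 K n a a - H0 K n b b) *: delta_mx a b.
Proof.
have e : H0 K n = diag_mx (\row_k H0 K n k k).
  apply/matrixP => i j; rewrite !mxE; case: (eqVneq i j) => [->|ne]; first by rewrite eqxx mulr1n.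
  by rewrite mulr0n.
by rewrite [in LHS]e diag_delta !mxE.
Qed.

Lemma H0_o k : (k < N)%N -> H0 K n (o k) (o k) =
  (if (k < n.-1)%N then 1 else if ((n <= k) && (k < n + n.-1))%N then -1 else 0).
Proof. by move=> hk; rewrite mxE eqxx o_val. Qed.

Lemma h0_0 : H0 K n (o 0) (o 0) = 1.
Proof. rewrite H0_o; last lia. by repeat (case: ifP => ?); try done; lia. Qed.
Lemma h0_1 : H0 K n (o 1) (o 1) = 1.
Proof. rewrite H0_o; last lia. by repeat (case: ifP => ?); try done; lia. Qed.
Lemma h0_A : H0 K n (o n.-1) (o n.-1) = 0.
Proof. rewrite H0_o; last lia. by repeat (case: ifP => ?); try done; lia. Qed.
Lemma h0_B : H0 K n (o n) (o n) = -1.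
Proof. rewrite H0_o; last lia. by repeat (case: ifP => ?); try done; lia. Qed.
Lemma h0_C : H0 K n (o n.+1) (o n.+1) = -1.
Proof. rewrite H0_o; last lia. by repeat (case: ifP => ?); try done; lia. Qed.
Lemma h0_D : H0 K n (o (n.*2 - 1)) (o (n.*2 - 1)) = 0.
Proof. rewrite H0_o; last lia. by repeat (case: ifP => ?); try done; lia. Qed.
Lemma h0_E : H0 K n (o n.*2) (o n.*2) = 0.
Proof. rewrite H0_o; last lia. by repeat (case: ifP => ?); try done; lia. Qed.
Definition h0s := (h0_0, h0_1, h0_A, h0_B, h0_C, h0_D, h0_E).

Lemma lieDr (A u v : M) : lie A (u + v) = lie A u + lie A v.
Proof. exact: (linearD (ad A)). Qed.
Lemma lieNr (A u : M) : lie A (- u) = - lie A u.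
Proof. exact: (linearN (ad A)). Qed.

Lemma X1_grade : grade 1 X1.
Proof.
split; first exact: X1_gso.
rewrite /X1 ?(lieDr, lieNr, lieBr) !H0_delta !h0s.
by rewrite subr0 sub0r opprK !scale1r.
Qed.

Lemma H0_diag : H0 K n = diag_mx (\row_k H0 K n k k).
Proof.
apply/matrixP => i j; rewrite !mxE; case: (eqVneq i j) => [->|ne]; first by rewrite eqxx mulr1n.
by rewrite mulr0n.
Qed.

Lemma cartan_H0 : cartan (H0 K n).
Proof.
split; last by rewrite H0_diag diag_mx_is_diag.
rewrite H0_diag; apply: diag_gso => k; rewrite !mxE !eqxx sig_val.
have := ltn_ord k; case: (ltnP k n) => h1; [|case: (ltnP k n.*2) => h2] => hk;
(repeat case: ifP => ?); rewrite ?oppr0 ?opprK //; lia.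
Qed.

Lemma Xs_grade (Y : M) : rootsp (wopp (wadd (eps K 0) (eps K 1))) Y -> grade (-2) Y.
Proof.
case=> hY hl; split => //; rewrite (hl _ (cartan_H0)); congr (_ *: _).
have n0 : (0 < n)%N by lia.
have n1 : (1 < n)%N by lia.
rewrite /weval (bigD1 (Ordinal n0)) //= (bigD1 (Ordinal n1)) //= big1 ?addr0.
  by rewrite !h0s /wopp /wadd /eps /= !mulr1 !add0r !addr0 -opprD.
move=> k /andP [k0 k1]; rewrite /wopp /wadd /eps.
move: k0 k1; rewrite -!(inj_eq val_inj) /= => /negbTE -> /negbTE ->.
by rewrite addr0 oppr0 mul0r.
Qed.
End Spec.

Unset Implicit Arguments.

Theorem proposition4p1 (R : realType) (n : nat) (hn : (4 <= n)%N)
  (* root vectors X_{eps_n}, X_{-eps_n} *)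
  (Xe Xme : 'M[R[i]]_(n.*2.+1))
  (hXe : rootsp (@eps R[i] n n.-1) Xe) (hXe0 : Xe != 0)
  (hXme : rootsp (wopp (@eps R[i] n n.-1)) Xme) (hXme0 : Xme != 0)
  (* root vectors X_gamma and dual vectors X*_gamma, gamma in Delta(z(n)) *)
  (Xg Xs : nat -> nat -> 'M[R[i]]_(n.*2.+1))
  (hXg : forall j k, (j < k < n.-1)%N ->
           rootsp (wadd (@eps R[i] n j) (@eps R[i] n k)) (Xg j k))
  (hXs : forall j k, (j < k < n.-1)%N ->
           rootsp (wopp (wadd (@eps R[i] n j) (@eps R[i] n k))) (Xs j k))
  (hdual : forall j k j' k', (j < k < n.-1)%N -> (j' < k' < n.-1)%N ->
           kappa (Xs j k) (Xg j' k') = ((j == j') && (k == k'))%:R) :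
  exists Ystar : seq ('M[R[i]]_(n.*2.+1) * 'M[R[i]]_(n.*2.+1)),
    (forall p, p \in Ystar -> lngamma Xe Xme p.1 /\ grade (-2) p.2) /\
    exists X : 'M[R[i]]_(n.*2.+1), grade 1 X /\ tau2t Xg Xs Ystar X != 0.
Proof.
have h01 : (0 < 1 < n.-1)%N by lia.
set x := Xe (o n n.-1) (o n n.*2).
have eXe : Xe = x *: Xe0 R[i] n by rewrite [LHS](shape_e hn hXe).
have x0 : x != 0 by apply: contraNneq hXe0; rewrite eXe => ->; rewrite scale0r.
have hg := hXg 0 1 h01.
set y := Xg 0 1 (o n 0) (o n n.+1).
have eXg : Xg 0 1 = y *: Eg R[i] n by rewrite [LHS](shape_g hn hg).
have hs := hXs 0 1 h01.
have k1 : kappa (Xg 0 1) (Xs 0 1) = 1.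
  by rewrite kappa_sym ?hdual ?eqxx //; [exact: hg.1 | exact: hs.1].
have kE : kappa (Eg R[i] n) (Xs 0 1) != 0.
  by apply/eqP => e; move: k1; rewrite eXg kappaZl e mulr0 => /eqP; rewrite eq_sym oner_eq0.
exists [:: (Xe, Xs 0 1)]; split.
  move=> p; rewrite inE => /eqP -> /=; split; last exact: Xs_grade hs.
  by exists 1, 0, 0; rewrite scale1r !scale0r !addr0.
exists (X1 R[i] n); split; first exact: X1_grade.
rewrite /tau2t /tpair big_cons big_nil addr0 /tau2 big_map.
set L := [seq jk <- _ | _].
have mL : (0, 1)%N \in L.
  rewrite mem_filter h01 /=; apply/allpairsP; exists (0, 1)%N => /=; rewrite !mem_iota; split => //; lia.
have uL : uniq L.
  apply: filter_uniq; apply: allpairs_uniq; try exact: iota_uniq.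
  by move=> [a b] [c d].
rewrite (bigD1_seq _ mL uL) /= big1_seq ?addr0; last first.
  move=> [j k] /andP [ne]; rewrite mem_filter /= => /andP [hjk _].
  rewrite hdual //; case: eqP => [e0|]; last by rewrite mulr0.
  case: eqP => [e1|]; last by rewrite mulr0.
  by move: ne; rewrite -e0 -e1 eqxx.
rewrite hdual // !eqxx mulr1 kappaZr.
have hX1 := X1_gso R[i] hn.
rewrite -(kappa_inv hXe.1 hX1 (lie_gso hX1 hs.1)).
rewrite -(kappa_inv (lie_gso hXe.1 hX1) hX1 hs.1).
rewrite eXe !lieZl (step1 R[i] hn) (step2 R[i] hn) !kappaZl.
have two : (2%:R : R[i]) != 0 by rewrite pnatr_eq0.
by rewrite !mulf_neq0 ?invr_eq0.
Qed.
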